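(* Fix integers $1\le k\le n$, a graph $G$ on $n$ vertices, and $\alpha\in\mathbb{R}$. Then $A^{\circ\alpha}$ is positive semidefinite for all $A\in\mathcal{C}_n^k([0,\infty))$ if and only if $A^{\circ\alpha}$ is positive semidefinite for all $A\in\mathcal{P}_n^k([0,\infty))$; and $A^{\circ\alpha}\in\mathcal{P}_G$ for all $A\in\mathcal{C}_G([0,\infty))$ if and only if $A^{\circ\alpha}\in\mathcal{P}_G$ for all $A\in\mathcal{P}_G([0,\infty))$. The analogous equivalences hold for $f=\phi_\alpha$ and $f=\psi_\alpha$ applied entrywise, with $\mathcal{C}_n^k(\mathbb{R})$, $\mathcal{P}_n^k(\mathbb{R})$, $\mathcal{C}_G(\mathbb{R})$, $\mathcal{P}_G(\mathbb{R})$ in place of the sets with entries in $[0,\infty)$.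
   Context: For $I\subset\mathbb{R}$, $\mathcal{P}_n(I)$ is the set of real symmetric PSD $n\times n$ matrices with entries in $I$, and $\mathcal{P}_n^k(I)$ those of rank at most $k$. For a graph $G$ on $\{1,\dots,n\}$, $\mathcal{P}_G(I)$ is the set of matrices in $\mathcal{P}_n(I)$ with $a_{ij}=0$ whenever $i\neq j$ and $(i,j)$ is not an edge; $\mathcal{P}_G=\mathcal{P}_G(\mathbb{R})$. A correlation matrix is a PSD matrix with all diagonal entries equal to $1$; $\mathcal{C}_n^k(I)$ and $\mathcal{C}_G(I)$ denote the sets of correlation matrices in $\mathcal{P}_n^k(I)$ and $\mathcal{P}_G(I)$ respectively. $A^{\circ\alpha}=(a_{ij}^\alpha)$ with $0^\alpha:=0$; $\psi_\alpha(x)=\mathrm{sgn}(x)|x|^\alpha$, $\phi_\alpha(x)=|x|^\alpha$ ($x\ne0$), $\psi_\alpha(0)=\phi_\alpha(0)=0$, applied entrywise. *)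

(* Defs.v *)
From HB Require Import structures.
From mathcomp Require Import all_boot all_order all_algebra.
From mathcomp Require Import all_classical all_reals all_analysis.
Set Implicit Arguments. Unset Strict Implicit. Unset Printing Implicit Defensive.
Import Order.TTheory GRing.Theory Num.Theory.
Local Open Scope ring_scope.

Definition psd (R : realType) (n : nat) (A : 'M[R]_n) : Prop :=
  A^T = A /\ forall v : 'cV[R]_n, 0 <= (v^T *m A *m v) 0 0.

Definition entries_in (R : realType) (n : nat) (I : pred R) (A : 'M[R]_n) : Prop :=
  forall i j, I (A i j).

Definition unit_diag (R : realType) (n : nat) (A : 'M[R]_n) : Prop :=
  forall i, A i i = 1.

Definition Pnk (R : realType) (n k : nat) (I : pred R) (A : 'M[R]_n) : Prop :=
  [/\ psd A, entries_in I A & (\rank A <= k)%N].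

Definition Cnk (R : realType) (n k : nat) (I : pred R) (A : 'M[R]_n) : Prop :=
  Pnk k I A /\ unit_diag A.

Definition G_pattern (R : realType) (n : nat) (G : rel 'I_n) (A : 'M[R]_n) : Prop :=
  forall i j, i != j -> ~~ G i j -> A i j = 0.

Definition PG (R : realType) (n : nat) (G : rel 'I_n) (I : pred R) (A : 'M[R]_n) : Prop :=
  [/\ psd A, entries_in I A & G_pattern G A].

Definition CG (R : realType) (n : nat) (G : rel 'I_n) (I : pred R) (A : 'M[R]_n) : Prop :=
  PG G I A /\ unit_diag A.

Definition nonneg (R : realType) : pred R := fun x => 0 <= x.
Definition allR (R : realType) : pred R := predT.

(* x^alpha with the convention 0^alpha := 0 (used for x >= 0). *)
Definition powz (R : realType) (alpha x : R) : R :=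
  if x == 0 then 0 else powR x alpha.

Definition phi (R : realType) (alpha x : R) : R :=
  if x == 0 then 0 else powR `|x| alpha.

Definition psi (R : realType) (alpha x : R) : R :=
  if x == 0 then 0 else Num.sg x * powR `|x| alpha.

Definition entrywise (R : realType) (n : nat) (f : R -> R) (A : 'M[R]_n) : 'M[R]_n :=
  map_mx f A.

(* Main.v *)
Require Import Defs.
From HB Require Import structures.
From mathcomp Require Import all_boot all_order all_algebra.
From mathcomp Require Import all_classical all_reals all_analysis.
Import Order.TTheory GRing.Theory Num.Theory.
Local Open Scope ring_scope.
From mathcomp Require Import ring lra.

Set Implicit Arguments. Unset Strict Implicit.
Section S.
Variable R : realType.

Lemma deltaE n (A : 'M[R]_n) i j : ((delta_mx (0:'I_1) i *m A) *m delta_mx j (0:'I_1)) 0 0 = A i j.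
Proof. by rewrite -rowE -colE !mxE. Qed.

Lemma addE m p (M N : 'M[R]_(m,p)) a b : (M + N) a b = M a b + N a b.
Proof. by rewrite mxE. Qed.
Lemma sclE m p (M : 'M[R]_(m,p)) c a b : (c *: M) a b = c * M a b.
Proof. by rewrite mxE. Qed.

Lemma quad n (A : 'M[R]_n) (x y : R) i j : psd A ->
  0 <= x ^+ 2 * A i i + 2 * x * y * A i j + y ^+ 2 * A j j.
Proof.
case=> hs hq; have := hq (x *: delta_mx i 0 + y *: delta_mx j 0).
have -> : (x *: delta_mx i 0 + y *: delta_mx j 0)^T = x *: delta_mx 0 i + y *: delta_mx 0 j :> 'rV[R]_n.
  apply/matrixP=> a b; by rewrite !mxE (andbC (a == 0)) (andbC (a==0)).
rewrite !mulmxDl !mulmxDr -!scalemxAl -!scalemxAr !addE !sclE !deltaE.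
have -> : A j i = A i j by rewrite -[in LHS]hs mxE.
set a := A i i; set b := A i j; set c := A j j.
have -> : x * (x * a) + x * (y * b) + (y * (x * b) + y * (y * c)) = x ^+ 2 * a + 2 * x * y * b + y ^+ 2 * c by ring.
done.
Qed.

Lemma psd_diag n (A : 'M[R]_n) i : psd A -> 0 <= A i i.
Proof. move=> h; have := quad 1 0 i i h.
by have -> : 1 ^+ 2 * A i i + 2 * 1 * 0 * A i i + 0 ^+ 2 * A i i = A i i by ring. Qed.

Lemma psd_row0 n (A : 'M[R]_n) i j : psd A -> A i i = 0 -> A i j = 0.
Proof.
move=> h h0; apply/eqP; apply/negPn/negP => hb.
have := quad (- (A j j + 1) / (2 * A i j)) 1 i j h.
rewrite h0 mulr0 add0r expr1n mul1r mulr1.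
have -> : 2 * (- (A j j + 1) / (2 * A i j)) * A i j = - (A j j + 1).
  by field; rewrite hb.
lra.
Qed.

Lemma psd_congr n (F X : 'M[R]_n) : psd F -> psd (X^T *m F *m X).
Proof.
case=> hs hq; split.
  by rewrite !trmx_mul trmxK hs mulmxA.
move=> v; have := hq (X *m v).
by rewrite trmx_mul !mulmxA.
Qed.

Lemma psd_diag_congr n (F : 'M[R]_n) (e : 'rV[R]_n) : psd F ->
  psd (\matrix_(i, j) (e 0 i * F i j * e 0 j)).
Proof.
move=> h; have := psd_congr (diag_mx e) h.
rewrite tr_diag_mx mul_diag_mx mul_mx_diag.
by congr psd; apply/matrixP=> i j; rewrite !mxE.
Qed.

Lemma transfer n (f : R -> R) (I : pred R) (A C : 'M[R]_n) :
  f 0 = 0 ->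
  (forall a x b, 0 < a -> 0 < b -> I x -> f (a * x * b) = f a * f x * f b) ->
  psd A -> psd (entrywise f C) -> entries_in I C ->
  (forall i j, 0 < A i i -> 0 < A j j -> A i j = Num.sqrt (A i i) * C i j * Num.sqrt (A j j)) ->
  psd (entrywise f A).
Proof.
move=> f0 fm hA hC hI hrel.
have := psd_diag_congr (\row_i f (Num.sqrt (A i i))) hC.
congr psd; apply/matrixP=> i j; rewrite !mxE.
have [hi|hi] := ltrP 0 (A i i); last first.
  have hi0 : A i i = 0 by apply/eqP; rewrite eq_le hi psd_diag.
  by rewrite (psd_row0 j hA hi0) hi0 sqrtr0 f0 !mul0r.
have [hj|hj] := ltrP 0 (A j j); last first.
  have hj0 : A j j = 0 by apply/eqP; rewrite eq_le hj psd_diag.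
  have hji : A j i = 0 by apply: psd_row0.
  have hij : A i j = 0.
    by case: (hA) => hs _; rewrite -hs mxE.
  rewrite hij.
  by rewrite hj0 sqrtr0 f0 !mulr0.
by rewrite [in RHS](hrel i j) // fm // sqrtr_gt0.
Qed.

Lemma diag_congrE n (A : 'M[R]_n) (e : 'rV[R]_n) :
  \matrix_(i, j) (e 0 i * A i j * e 0 j) = (diag_mx e)^T *m A *m diag_mx e.
Proof.
rewrite tr_diag_mx mul_diag_mx mul_mx_diag.
by apply/matrixP=> i j; rewrite !mxE.
Qed.

Lemma sum_ind_r n (u : 'I_n -> R) c : \sum_l u l * (l == c)%:R = u c.
Proof.
rewrite (bigD1 c) //= eqxx mulr1 big1 ?addr0 // => l /negbTE ->.
by rewrite mulr0.
Qed.

Lemma sum_ind_l n (u : 'I_n -> R) c : \sum_l (l == c)%:R * u l = u c.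
Proof.
rewrite (bigD1 c) //= eqxx mul1r big1 ?addr0 // => l /negbTE ->.
by rewrite mul0r.
Qed.

Lemma psd1 n : psd (1%:M : 'M[R]_n).
Proof.
split; first by rewrite trmx1.
move=> v; rewrite mulmx1 mxE; apply: sumr_ge0 => i _.
by rewrite mxE -expr2 sqr_ge0.
Qed.

Lemma psd_diag_nonneg n (z : 'rV[R]_n) : (forall i, 0 <= z 0 i) -> psd (diag_mx z).
Proof.
move=> hz; have := psd_diag_congr (\row_i Num.sqrt (z 0 i)) (@psd1 n).
congr psd; apply/matrixP=> i j; rewrite !mxE.
case: eqP => [->|_]; last by rewrite mulr0 mul0r.
by rewrite mulr1 -expr2 sqr_sqrtr.
Qed.

Lemma psd_add n (A B : 'M[R]_n) : psd A -> psd B -> psd (A + B).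
Proof.
case=> ha qa [hb qb]; split; first by rewrite linearD /= ha hb.
move=> v; rewrite mulmxDr mulmxDl mxE; exact: addr_ge0.
Qed.

Lemma psd0 n (A : 'M[R]_n) : (forall i j, A i j = 0) -> psd A.
Proof.
move=> h; have -> : A = 0 by apply/matrixP=> i j; rewrite h mxE.
by split; [rewrite trmx0 | move=> v; rewrite mulmx0 mul0mx mxE].
Qed.

Definition sv n (A : 'M[R]_n) : 'rV[R]_n :=
  \row_i (if 0 < A i i then (Num.sqrt (A i i))^-1 else 0).

Lemma sv_ge0 n (A : 'M[R]_n) i : 0 <= sv A 0 i.
Proof. rewrite mxE; case: ifP => h //; by rewrite invr_ge0 sqrtr_ge0. Qed.

Lemma sv_pos n (A : 'M[R]_n) i : 0 < A i i -> sv A 0 i = (Num.sqrt (A i i))^-1.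
Proof. by move=> h; rewrite mxE h. Qed.

Lemma sqrt_inv (a : R) : 0 < a -> Num.sqrt a * (Num.sqrt a)^-1 = 1.
Proof. by move=> h; rewrite mulfV // gt_eqF // sqrtr_gt0. Qed.

Lemma inv_sqrt (a : R) : 0 < a -> (Num.sqrt a)^-1 * a * (Num.sqrt a)^-1 = 1.
Proof.
move=> h; have hs : Num.sqrt a != 0 by rewrite gt_eqF // sqrtr_gt0.
rewrite -{2}(sqr_sqrtr (ltW h)) expr2; by field.
Qed.

Lemma relB n (A : 'M[R]_n) (c : R) i j : 0 < A i i -> 0 < A j j ->
  Num.sqrt (A i i) * (sv A 0 i * A i j * sv A 0 j + c) * Num.sqrt (A j j)
  = A i j + Num.sqrt (A i i) * c * Num.sqrt (A j j).
Proof.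
move=> hi hj; rewrite !sv_pos //.
have := sqrt_inv hi; have := sqrt_inv hj.
set x := Num.sqrt (A i i); set y := Num.sqrt (A j j) => hy hx.
have -> : x * (x^-1 * A i j * y^-1 + c) * y = (x * x^-1) * A i j * (y^-1 * y) + x * c * y by ring.
by rewrite hx [y^-1 * y]mulrC hy mul1r mulr1.
Qed.

Lemma permE n (B : 'M[R]_n) (pi : 'I_n -> 'I_n) i j :
  ((\matrix_(a, b) (a == pi b)%:R)^T *m B *m \matrix_(a, b) (a == pi b)%:R) i j
  = B (pi i) (pi j).
Proof.
rewrite mxE; under eq_bigr do rewrite mxE.
under eq_bigr do under eq_bigr do rewrite !mxE.
rewrite -[RHS](sum_ind_r (fun l => B (pi i) l) (pi j)).
apply: eq_bigr => l _; rewrite mxE.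
by rewrite (sum_ind_l (fun k => B k l)).
Qed.

Section F.
Variables (f : R -> R) (I : pred R).
Hypothesis f0 : f 0 = 0.
Hypothesis fm : forall a x b, 0 < a -> 0 < b -> I x -> f (a * x * b) = f a * f x * f b.
Hypothesis Isc : forall a x b, 0 <= a -> 0 <= b -> I x -> I (a * x * b).
Hypothesis Iadd : forall x y, I x -> 0 <= y -> I (x + y).

Lemma rank_case n k : (forall C : 'M[R]_n, Cnk k I C -> psd (entrywise f C)) ->
  forall A : 'M[R]_n, Pnk k I A -> psd (entrywise f A).
Proof.
move=> hC A [hA hI hr].
have [/existsP [p hp]|hn] := boolP [exists p, 0 < A p p]; last first.
  apply: psd0 => i j; rewrite mxE.
  have hii : A i i = 0.
    apply/eqP; rewrite eq_le psd_diag // andbT leNgt.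
    by apply: contra hn => h; apply/existsP; exists i.
  by rewrite (psd_row0 j hA hii) f0.
pose pi i := if 0 < A i i then i else p.
have hpi i : 0 < A (pi i) (pi i) by rewrite /pi; case: ifP.
pose Pm : 'M[R]_n := \matrix_(a, b) (a == pi b)%:R.
pose B := \matrix_(i, j) (sv A 0 i * A i j * sv A 0 j).
pose C := Pm^T *m B *m Pm.
have hB : psd B by apply: psd_diag_congr.
have CE i j : C i j = B (pi i) (pi j).
  exact: permE.
apply: (transfer f0 fm hA (C := C)).
- apply: hC; split; last first.
    by move=> i; rewrite CE mxE sv_pos // inv_sqrt.
  split.
  + exact: psd_congr.
  + by move=> i j; rewrite CE mxE; apply: Isc; rewrite ?sv_ge0.
  + apply: leq_trans hr; apply: leq_trans (mxrankM_maxl _ _) _.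
    apply: leq_trans (mxrankM_maxr _ _) _.
    rewrite /B diag_congrE; apply: leq_trans (mxrankM_maxl _ _) _.
    exact: mxrankM_maxr.
- by move=> i j; rewrite CE mxE; apply: Isc; rewrite ?sv_ge0.
- move=> i j hi hj; rewrite CE /pi hi hj mxE.
  by have := relB 0 hi hj; rewrite !addr0 !mulr0 mul0r addr0 => ->.
Qed.


Lemma G_case n (G : rel 'I_n) :
  (forall C : 'M[R]_n, CG G I C -> PG G (@allR R) (entrywise f C)) ->
  forall A : 'M[R]_n, PG G I A -> PG G (@allR R) (entrywise f A).
Proof.
move=> hC A [hA hI hG].
split; first last.
- by move=> i j hij hg; rewrite mxE hG // f0.
- by [].
pose z : 'rV[R]_n := \row_i (if 0 < A i i then 0 else 1).
have zE i : z 0 i = if 0 < A i i then 0 else 1 by rewrite mxE.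
have z0 i : 0 <= z 0 i by rewrite zE; case: ifP.
pose C := \matrix_(i, j) (sv A 0 i * A i j * sv A 0 j) + diag_mx z.
have CE i j : C i j = sv A 0 i * A i j * sv A 0 j + z 0 i *+ (i == j).
  by rewrite !mxE.
apply: (transfer f0 fm hA (C := C)).
- have [] := hC C; last by [].
  split; last first.
    move=> i; rewrite CE eqxx mulr1n zE.
    case: ifP => h; first by rewrite sv_pos // inv_sqrt // addr0.
    by rewrite [sv A 0 i]mxE h !mul0r add0r.
  split.
  + by apply: psd_add; [apply: psd_diag_congr | apply: psd_diag_nonneg].
  + move=> i j; rewrite CE; apply: Iadd; first by apply: Isc; rewrite ?sv_ge0.
    exact: mulrn_wge0.
  + by move=> i j hij hg; rewrite CE hG // (negbTE hij) mulr0 mul0r addr0.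
- move=> i j; rewrite CE; apply: Iadd; first by apply: Isc; rewrite ?sv_ge0.
  exact: mulrn_wge0.
- move=> i j hi hj; rewrite CE relB // zE hi mul0rn mulr0 mul0r addr0.
  by [].
Qed.

End F.
End S.

Section Inst.
Variable R : realType.
Variable alpha : R.

Lemma powz0 : powz alpha (0:R) = 0. Proof. by rewrite /powz eqxx. Qed.
Lemma phi0 : phi alpha (0:R) = 0. Proof. by rewrite /phi eqxx. Qed.
Lemma psi0 : psi alpha (0:R) = 0. Proof. by rewrite /psi eqxx. Qed.

Lemma nz3 (a x b : R) : 0 < a -> 0 < b -> (a * x * b == 0) = (x == 0).
Proof.
move=> ha hb; rewrite !mulf_eq0 (gt_eqF ha) (gt_eqF hb) /=.
by rewrite orbF.
Qed.

Lemma powz_m (a x b : R) : 0 < a -> 0 < b -> nonneg x ->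
  powz alpha (a * x * b) = powz alpha a * powz alpha x * powz alpha b.
Proof.
move=> ha hb hx; rewrite /powz nz3 // (gt_eqF ha) (gt_eqF hb).
case: eqP => _; first by rewrite mulr0 mul0r.
rewrite !powRM ?mulr_ge0 //; exact: ltW.
Qed.

Lemma phi_m (a x b : R) : 0 < a -> 0 < b -> allR x ->
  phi alpha (a * x * b) = phi alpha a * phi alpha x * phi alpha b.
Proof.
move=> ha hb _; rewrite /phi nz3 // (gt_eqF ha) (gt_eqF hb).
case: eqP => _; first by rewrite mulr0 mul0r.
rewrite !normrM (gtr0_norm ha) (gtr0_norm hb) !powRM ?mulr_ge0 //; exact: ltW.
Qed.

Lemma psi_m (a x b : R) : 0 < a -> 0 < b -> allR x ->
  psi alpha (a * x * b) = psi alpha a * psi alpha x * psi alpha b.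
Proof.
move=> ha hb _; rewrite /psi nz3 // (gt_eqF ha) (gt_eqF hb).
case: eqP => _; first by rewrite mulr0 mul0r.
rewrite !normrM (gtr0_norm ha) (gtr0_norm hb) !powRM ?mulr_ge0 ?(ltW ha) ?(ltW hb) //.
rewrite !sgrM (gtr0_sg ha) (gtr0_sg hb) !mul1r !mulr1.
by rewrite !mulrA [Num.sg x * _]mulrC.
Qed.
End Inst.


Unset Implicit Arguments.
Theorem proposition4p15 (R : realType) (n k : nat) (G : rel 'I_n) (alpha : R)
  (hk1 : (1 <= k)%N) (hkn : (k <= n)%N)
  (Gsym : symmetric G) (Girr : irreflexive G) :
  (* A^{o alpha}, entries in [0, oo) *)
  ((forall A : 'M[R]_n, Cnk k (@nonneg R) A -> psd (entrywise (powz alpha) A)) <->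
   (forall A : 'M[R]_n, Pnk k (@nonneg R) A -> psd (entrywise (powz alpha) A))) /\
  ((forall A : 'M[R]_n, CG G (@nonneg R) A -> PG G (@allR R) (entrywise (powz alpha) A)) <->
   (forall A : 'M[R]_n, PG G (@nonneg R) A -> PG G (@allR R) (entrywise (powz alpha) A))) /\
  (* phi_alpha, entries in R *)
  ((forall A : 'M[R]_n, Cnk k (@allR R) A -> psd (entrywise (phi alpha) A)) <->
   (forall A : 'M[R]_n, Pnk k (@allR R) A -> psd (entrywise (phi alpha) A))) /\
  ((forall A : 'M[R]_n, CG G (@allR R) A -> PG G (@allR R) (entrywise (phi alpha) A)) <->
   (forall A : 'M[R]_n, PG G (@allR R) A -> PG G (@allR R) (entrywise (phi alpha) A))) /\
  (* psi_alpha, entries in R *)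
  ((forall A : 'M[R]_n, Cnk k (@allR R) A -> psd (entrywise (psi alpha) A)) <->
   (forall A : 'M[R]_n, Pnk k (@allR R) A -> psd (entrywise (psi alpha) A))) /\
  ((forall A : 'M[R]_n, CG G (@allR R) A -> PG G (@allR R) (entrywise (psi alpha) A)) <->
   (forall A : 'M[R]_n, PG G (@allR R) A -> PG G (@allR R) (entrywise (psi alpha) A))).
Proof.
have nn_sc : forall (a x b : R), 0 <= a -> 0 <= b -> nonneg x -> nonneg (a * x * b).
  by move=> a x b ha hb hx; rewrite /nonneg !mulr_ge0.
have nn_add : forall (x y : R), nonneg x -> 0 <= y -> nonneg (x + y).
  by move=> x y hx hy; rewrite /nonneg addr_ge0.
have al_sc : forall (a x b : R), 0 <= a -> 0 <= b -> allR x -> allR (a * x * b) by [].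
have al_add : forall (x y : R), allR x -> 0 <= y -> allR (x + y) by [].
have PC : forall (I : pred R) (P : 'M[R]_n -> Prop),
   (forall A, Pnk k I A -> P A) -> forall A, Cnk k I A -> P A.
  by move=> I P h A [hA _]; exact: h.
have PCG : forall (I : pred R) (P : 'M[R]_n -> Prop),
   (forall A, PG G I A -> P A) -> forall A, CG G I A -> P A.
  by move=> I P h A [hA _]; exact: h.
split; [split; [move=> h; exact: (rank_case (powz0 alpha) (@powz_m R alpha) nn_sc h) | exact: PC]|].
split; [split; [move=> h; exact: (G_case (powz0 alpha) (@powz_m R alpha) nn_sc nn_add h) | exact: PCG]|].
split; [split; [move=> h; exact: (rank_case (phi0 alpha) (@phi_m R alpha) al_sc h) | exact: PC]|].
split; [split; [move=> h; exact: (G_case (phi0 alpha) (@phi_m R alpha) al_sc al_add h) | exact: PCG]|].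
split; [split; [move=> h; exact: (rank_case (psi0 alpha) (@psi_m R alpha) al_sc h) | exact: PC]|].
split; [move=> h; exact: (G_case (psi0 alpha) (@psi_m R alpha) al_sc al_add h) | exact: PCG].
Qed.
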